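(* Let $(X,d,\mu)$ be unbounded with base point $a$, assume $X$ is uniformly perfect at $a$ for radii $\ge1$ with constant $\kappa$, and assume that $\mu$ is doubling on $X$ and that $\hat\mu_q$, for some $q>0$, is doubling on $(\widehat X,\hat d)$. Then there are $0<s<q$ and $C_s>0$ such that $$\frac{\mu(B(a,r))}{\mu(B(a,R))}\ge C_s\Bigl(\frac rR\Bigr)^s\quad\text{whenever }1\le r\le R<\infty.$$
   Context: $\mu$ is a positive complete Borel measure on $(X,d)$ with $0<\mu(B)<\infty$ for every (open) ball $B(x,r)=\{y:d(x,y)<r\}$. A measure $\nu$ on a metric space is doubling if there is $C$ with $0<\nu(B(x,2r))\le C\nu(B(x,r))<\infty$ for all balls. $X$ is uniformly perfect at $a$ for radii $\ge1$ with constant $\kappa>1$ if $B(a,\kappa r)\setminus B(a,r)\ne\emptyset$ for all $r\ge1$. Sphericalization: $|x|=d(x,a)$, $\widehat X=X\cup\{\infty\}$, $d_a(x,y)=\frac{d(x,y)}{(1+|x|)(1+|y|)}$ for $x,y\in X$, $d_a(x,\infty)=d_a(\infty,x)=\frac1{1+|x|}$, $d_a(\infty,\infty)=0$; $\hat d(x,y)=\inf\sum_{j=1}^k d_a(x_{j-1},x_j)$ over finite chains $x=x_0,\dots,x_k=y$ in $\widehat X$. The measure $\hat\mu_q$ on $\widehat X$ is $d\hat\mu_q(x)=\frac{d\mu(x)}{(1+|x|)^q}$ on $X$ with $\hat\mu_q(\{\infty\})=0$. *)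

(* Defs.v *)
From HB Require Import structures.
From mathcomp Require Import all_boot all_order all_algebra.
From mathcomp Require Import all_classical all_reals all_analysis.
Set Implicit Arguments. Unset Strict Implicit. Unset Printing Implicit Defensive.
Import Order.TTheory GRing.Theory Num.Theory.
Local Open Scope classical_set_scope.
Local Open Scope ring_scope.

Section Defs.
Context {R : realType} {X : Type}.

Definition is_metric (d : X -> X -> R) : Prop :=
  (forall x y, 0 <= d x y) /\ (forall x y, d x y = 0 <-> x = y) /\
  (forall x y, d x y = d y x) /\ (forall x y z, d x z <= d x y + d y z).

Definition dball (d : X -> X -> R) (x : X) (r : R) : set X := [set y | d x y < r].

Definition dopen (d : X -> X -> R) (A : set X) : Prop :=
  forall x, A x -> exists2 e : R, 0 < e & dball d x e `<=` A.

Definition unbounded_at (d : X -> X -> R) (a : X) : Prop :=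
  forall M : R, exists x, M < d a x.

Definition unif_perfect_at (d : X -> X -> R) (a : X) (kappa : R) : Prop :=
  1 < kappa /\
  forall r : R, 1 <= r -> (dball d a (kappa * r) `\` dball d a r) !=set0.

(* sphericalized distance d_a on Xhat = option X (None = infinity) *)
Definition d_sph (d : X -> X -> R) (a : X) (x y : option X) : R :=
  match x, y with
  | Some x, Some y => d x y / ((1 + d a x) * (1 + d a y))
  | Some x, None => 1 / (1 + d a x)
  | None, Some y => 1 / (1 + d a y)
  | None, None => 0
  end.

Fixpoint chain_len (d : X -> X -> R) (a : X) (x : option X)
    (l : seq (option X)) (y : option X) : R :=
  match l with
  | [::] => d_sph d a x y
  | z :: l' => d_sph d a x z + chain_len d a z l' y
  end.

Definition dhat (d : X -> X -> R) (a : X) (x y : option X) : R :=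
  inf (range (fun l => chain_len d a x l y)).

Definition dhat_ball (d : X -> X -> R) (a : X) (x : option X) (r : R)
  : set (option X) := [set y | dhat d a x y < r].

End Defs.

Section Meas.
Context {R : realType} {dsp : measure_display} {X : measurableType dsp}.
Local Open Scope ereal_scope.

Definition doubling (d : X -> X -> R) (mu : set X -> \bar R) : Prop :=
  exists C : R, forall (x : X) (r : R), (0 < r)%R ->
    0 < mu (dball d x (2 * r)) /\
    mu (dball d x (2 * r)) <= C%:E * mu (dball d x r) /\
    mu (dball d x r) < +oo.

Definition muhat (d : X -> X -> R) (a : X) (mu : {measure set X -> \bar R})
    (q : R) (A : set (option X)) : \bar R :=
  \int[mu]_(x in [set x | A (Some x)]) ((1 + d a x) `^ (- q))%:E.

Definition doubling_hat (d : X -> X -> R) (a : X)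
    (mu : {measure set X -> \bar R}) (q : R) : Prop :=
  exists C : R, forall (x : option X) (r : R), (0 < r)%R ->
    0 < muhat d a mu q (dhat_ball d a x (2 * r)) /\
    muhat d a mu q (dhat_ball d a x (2 * r))
      <= C%:E * muhat d a mu q (dhat_ball d a x r) /\
    muhat d a mu q (dhat_ball d a x r) < +oo.

End Meas.

(* Main.v *)
Require Import Defs.
From HB Require Import structures.
From mathcomp Require Import all_boot all_order all_algebra.
From mathcomp Require Import all_classical all_reals all_analysis.
From mathcomp Require Import ring lra measurable_realfun.
Import Order.TTheory GRing.Theory Num.Theory.
Local Open Scope classical_set_scope.
Local Open Scope ring_scope.

Definition phi {R : realType} {X : Type} (d : X -> X -> R) (a : X) (x : option X) : R :=
  match x with Some x => 1 / (1 + d a x) | None => 0 end.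

Lemma absd_le {R : realType} {X : Type} (d : X -> X -> R) a x y :
  is_metric d -> `|d a x - d a y| <= d x y.
Proof.
move=> [d0 [dxx [dsym dtr]]].
have h1 := dtr a y x. have h2 := dtr a x y. rewrite (dsym y x) in h1.
rewrite ler_norml; apply/andP; split; lra.
Qed.

Lemma phi_dsph {R : realType} {X : Type} (d : X -> X -> R) a x y :
  is_metric d -> `|phi d a x - phi d a y| <= d_sph d a x y.
Proof.
move=> hm; have d0 := hm.1.
case: x => [x|]; case: y => [y|] /=.
- have hx : 0 < 1 + d a x by have := d0 a x; lra.
  have hy : 0 < 1 + d a y by have := d0 a y; lra.
  have -> : 1 / (1 + d a x) - 1 / (1 + d a y) = (d a y - d a x) / ((1 + d a x) * (1 + d a y)).
    by field; apply/andP; split; rewrite gt_eqF.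
  rewrite normrM [X in _ * X]ger0_norm; last by rewrite invr_ge0 mulr_ge0 // ltW.
  apply: ler_wpM2r; first by rewrite invr_ge0 mulr_ge0 // ltW.
  by rewrite distrC; exact: absd_le.
- have hx : 0 < 1 + d a x by have := d0 a x; lra.
  by rewrite subr0 ger0_norm // divr_ge0 // ltW.
- have hy : 0 < 1 + d a y by have := d0 a y; lra.
  by rewrite sub0r normrN ger0_norm // divr_ge0 // ltW.
- by rewrite subrr normr0.
Qed.

Lemma phi_chain {R : realType} {X : Type} (d : X -> X -> R) a l x y :
  is_metric d -> `|phi d a x - phi d a y| <= chain_len d a x l y.
Proof.
move=> hm; elim: l x => [|z l IH] x /=; first exact: phi_dsph.
have := phi_dsph d a x z hm; have := IH z.
have := ler_normD (phi d a x - phi d a z) (phi d a z - phi d a y).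
rewrite addrA subrK. lra.
Qed.

Lemma phi_dhat {R : realType} {X : Type} (d : X -> X -> R) a x y :
  is_metric d -> `|phi d a x - phi d a y| <= dhat d a x y.
Proof.
move=> hm; apply: lb_le_inf; first by exists (chain_len d a x [::] y); exists [::].
by move=> _ [l _ <-]; exact: phi_chain.
Qed.

Lemma dhat_dsph {R : realType} {X : Type} (d : X -> X -> R) a x y :
  is_metric d -> dhat d a x y <= d_sph d a x y.
Proof.
move=> hm; apply: ge_inf; last by exists [::].
exists 0 => _ [l _ <-]; apply: le_trans (phi_chain d a l x y hm); exact: normr_ge0.
Qed.

Lemma tail_U {R : realType} {X : Type} (d : X -> X -> R) a z y :
  is_metric d -> d a z < d a y ->
  dhat d a (Some z) (Some y) < 2 * (2 * (1 / (1 + d a z) / 2)).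
Proof.
move=> hm hzy; have [d0 [_ [dsym dtr]]] := hm.
apply: le_lt_trans (dhat_dsph d a _ _ hm) _ => /=.
have hz : 0 < 1 + d a z by have := d0 a z; lra.
have hy : 0 < 1 + d a y by have := d0 a y; lra.
have -> : 2 * (2 * (1 / (1 + d a z) / 2)) = 2 / (1 + d a z) by field; rewrite gt_eqF.
rewrite ltr_pdivrMr ?mulr_gt0 //.
have -> : 2 / (1 + d a z) * ((1 + d a z) * (1 + d a y)) = 2 * (1 + d a y)
  by field; rewrite gt_eqF.
have := dtr z a y; rewrite (dsym z a); lra.
Qed.

Lemma V_ann {R : realType} {X : Type} (d : X -> X -> R) a z y :
  is_metric d -> dhat d a (Some z) (Some y) < 1 / (1 + d a z) / 2 ->
  2 * (1 + d a z) / 3 < 1 + d a y /\ 1 + d a y < 2 * (1 + d a z).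
Proof.
move=> hm h; have d0 := hm.1.
have hz : 0 < 1 + d a z by have := d0 a z; lra.
have hy : 0 < 1 + d a y by have := d0 a y; lra.
have := le_lt_trans (phi_dhat d a (Some z) (Some y) hm) h => /=.
have -> : 1 / (1 + d a z) - 1 / (1 + d a y) = (d a y - d a z) / ((1 + d a z) * (1 + d a y)).
  by field; apply/andP; split; rewrite gt_eqF.
rewrite normrM [X in _ * X]ger0_norm; last by rewrite invr_ge0 mulr_ge0 // ltW.
rewrite ltr_pdivrMr ?mulr_gt0 //.
have -> : 1 / (1 + d a z) / 2 * ((1 + d a z) * (1 + d a y)) = (1 + d a y) / 2
  by field; rewrite gt_eqF.
rewrite ltr_norml => /andP[h1 h2]; split; lra.
Qed.

Lemma int_mono d (T : measurableType d) (R : realType) (mu : {measure set T -> \bar R})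
  (D E : set T) (f g : T -> \bar R) :
  (forall x, (0 <= f x)%E) -> (forall x, (0 <= g x)%E) ->
  (forall x, D x -> E x /\ (f x <= g x)%E) ->
  (\int[mu]_(x in D) f x <= \int[mu]_(x in E) g x)%E.
Proof.
move=> f0 g0 fg; rewrite !ge0_integralE //=.
apply: ge_ereal_sup => _ [h /= hf <-]; apply: ereal_sup_ubound; exists h => //= x.
have := hf x; rewrite /patch; case: ifPn => [/[!inE] Dx|_].
  by have [Ex fgx] := fg x Dx; rewrite mem_set // => /le_trans; apply.
move=> hx; case: ifPn => _ //; exact: le_trans hx (g0 x).
Qed.

Lemma dopen_ball {R : realType} {X : Type} (d : X -> X -> R) x r :
  is_metric d -> dopen d (dball d x r).
Proof.
move=> [d0 [_ [dsym dtr]]] y; rewrite /dball /= => hy; exists (r - d x y); first lra.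
move=> w; rewrite /dball /= => hw; have := dtr x y w; lra.
Qed.

Lemma dopen_tail {R : realType} {X : Type} (d : X -> X -> R) a t :
  is_metric d -> dopen d [set y | t < d a y].
Proof.
move=> [d0 [_ [dsym dtr]]] y /= hy; exists (d a y - t); first lra.
move=> w; rewrite /dball /= => hw; have := dtr a w y; rewrite (dsym w y); lra.
Qed.

Lemma measurable_da {R : realType} dsp (X : measurableType dsp) (d : X -> X -> R) a :
  is_metric d -> (forall A : set X, dopen d A -> measurable A) ->
  measurable_fun setT (d a).
Proof.
move=> hm hB; apply: (measurability _ (measurable_realfun.RGenInftyO.measurableE R)).
move=> _ [_ [x ->] <-]; rewrite setTI.
have -> : d a @^-1` `]-oo, x[ = dball d a x.
  by apply/seteqP; split => y /=; rewrite in_itv /=.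
by apply: hB; exact: dopen_ball.
Qed.

Lemma measurable_w {R : realType} dsp (X : measurableType dsp) (d : X -> X -> R) a q :
  is_metric d -> (forall A : set X, dopen d A -> measurable A) ->
  measurable_fun setT (fun x => ((1 + d a x) `^ (- q))%:E).
Proof.
move=> hm hB; apply/measurable_EFinP.
rewrite (_ : (fun x => _) = (@powR R ^~ (- q)) \o (cst 1 \+ d a)) //.
apply: measurableT_comp; first exact: measurable_powR.
apply: measurable_funD; first exact: measurable_cst.
exact: measurable_da.
Qed.

Definition Iw {R : realType} {dsp} {X : measurableType dsp} (d : X -> X -> R)
  (mu : {measure set X -> \bar R}) a q (S : set X) : \bar R :=
  (\int[mu]_(x in S) ((1 + d a x) `^ (- q))%:E)%E.

Lemma Iw_mono {R : realType} {dsp} {X : measurableType dsp} (d : X -> X -> R) (mu : {measure set X -> \bar R}) a q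
  (S S' : set X) : S `<=` S' -> (Iw d mu a q S <= Iw d mu a q S')%E.
Proof.
move=> hS; apply: int_mono => [x|x|x /hS hx] //; rewrite ?lee_fin ?powR_ge0 //.
Qed.

Lemma Iw_ge0 {R : realType} {dsp} {X : measurableType dsp} (d : X -> X -> R) (mu : {measure set X -> \bar R}) a q
  (S : set X) : (0 <= Iw d mu a q S)%E.
Proof. by apply: integral_ge0 => x _; rewrite lee_fin powR_ge0. Qed.

Lemma Iw_le_cst {R : realType} {dsp} {X : measurableType dsp} (d : X -> X -> R) (mu : {measure set X -> \bar R}) a q
  (S B : set X) (c : R) : measurable B -> 0 <= c ->
  (forall x, S x -> B x /\ (1 + d a x) `^ (- q) <= c) ->
  (Iw d mu a q S <= c%:E * mu B)%E.
Proof.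
move=> mB c0 h; rewrite -integral_cst //.
apply: int_mono => [x|x|x /h [Bx hx]]; rewrite ?lee_fin ?powR_ge0 //.
Qed.

Lemma Iw_ge_cst {R : realType} {dsp} {X : measurableType dsp} (d : X -> X -> R) (mu : {measure set X -> \bar R}) a q
  (S B : set X) (c : R) : measurable B -> 0 <= c ->
  (forall x, B x -> S x /\ c <= (1 + d a x) `^ (- q)) ->
  (c%:E * mu B <= Iw d mu a q S)%E.
Proof.
move=> mB c0 h; rewrite -integral_cst //.
apply: int_mono => [x|x|x /h [Bx hx]]; rewrite ?lee_fin ?powR_ge0 //.
Qed.

Lemma Iw_split {R : realType} {dsp} {X : measurableType dsp} (d : X -> X -> R) (mu : {measure set X -> \bar R}) a q
  (A B : set X) : is_metric d -> (forall A : set X, dopen d A -> measurable A) ->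
  measurable A -> measurable B -> A `&` B = set0 ->
  Iw d mu a q (A `|` B) = (Iw d mu a q A + Iw d mu a q B)%E.
Proof.
move=> hm hB mA mB AB; apply: ge0_integral_setU => //.
- exact: (measurable_funS measurableT (@subsetT _ _) (measurable_w _ _ d a q hm hB)).
- by move=> x _; rewrite lee_fin powR_ge0.
- by rewrite disj_set2E AB.
Qed.

Lemma UV {R : realType} {dsp} {X : measurableType dsp} (d : X -> X -> R) (mu : {measure set X -> \bar R}) a q C z :
  is_metric d -> 0 <= C ->
  (forall x r, 0 < r -> (muhat d a mu q (dhat_ball d a x (2 * r)%R)
      <= C%:E * muhat d a mu q (dhat_ball d a x r))%E) ->
  (Iw d mu a q [set y | (d a z < d a y)%R] <=
   (C * C)%:E * Iw d mu a q [set y | (dhat d a (Some z) (Some y) < 1 / (1 + d a z) / 2)%R])%E.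
Proof.
move=> hm C0 hC.
have hz : 0 < 1 + d a z by have := hm.1 a z; lra.
have r0 : 0 < 1 / (1 + d a z) / 2 by rewrite divr_gt0 // divr_gt0.
apply: (@le_trans _ _ (Iw d mu a q [set y | dhat d a (Some z) (Some y) <
   2 * (2 * (1 / (1 + d a z) / 2))])).
  by apply: Iw_mono => y /= hy; exact: tail_U.
apply: le_trans (hC (Some z) _ _) _; first by rewrite mulr_gt0.
rewrite EFinM -muleA; apply: lee_wpmul2l; first by rewrite lee_fin.
exact: hC.
Qed.

Lemma pow_anti {R : realType} (x y q : R) : 0 < x -> x <= y -> 0 <= q ->
  y `^ (- q) <= x `^ (- q).
Proof.
move=> x0 xy q0; rewrite !powRN lef_pV2 ?posrE ?powR_gt0 //; last lra.
by apply: ge0_ler_powR => //; rewrite nnegrE; lra.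
Qed.

Lemma Iw_fin {R : realType} {dsp} {X : measurableType dsp} (d : X -> X -> R)
  (mu : {measure set X -> \bar R}) a q (S : set X) :
  is_metric d -> (muhat d a mu q (dhat_ball d a None 2) < +oo)%E ->
  Iw d mu a q S \is a fin_num.
Proof.
move=> hm hf; rewrite ge0_fin_numE ?Iw_ge0 //; apply: le_lt_trans hf.
apply: Iw_mono => y _ /=; apply: le_lt_trans (dhat_dsph d a _ _ hm) _ => /=.
have := hm.1 a y => h; rewrite ltr_pdivrMr; lra.
Qed.

Definition Tr {R : realType} {dsp} {X : measurableType dsp} (d : X -> X -> R)
  (mu : {measure set X -> \bar R}) a q (u : R) : R :=
  fine (Iw d mu a q [set y | u < d a y]).

Definition mr {R : realType} {dsp} {X : measurableType dsp} (d : X -> X -> R)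
  (mu : {measure set X -> \bar R}) x (r : R) : R := fine (mu (dball d x r)).

Lemma mr_mono {R : realType} {dsp} {X : measurableType dsp} (d : X -> X -> R)
  (mu : {measure set X -> \bar R}) x y r s :
  is_metric d -> (forall A : set X, dopen d A -> measurable A) ->
  (forall (x : X) (r : R), 0 < r ->
     (0 < mu (dball d x r))%E /\ (mu (dball d x r) < +oo)%E) ->
  0 < r -> 0 < s -> dball d x r `<=` dball d y s -> mr d mu x r <= mr d mu y s.
Proof.
move=> hm hB hpos r0 s0 sub; apply: fine_le.
- by rewrite ge0_fin_numE ?(hpos x r r0).2 // measure_ge0.
- by rewrite ge0_fin_numE ?(hpos y s s0).2 // measure_ge0.
- by apply: le_measure => //; rewrite inE; apply: hB; exact: dopen_ball.
Qed.

Lemma mr_gt0 {R : realType} {dsp} {X : measurableType dsp} (d : X -> X -> R)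
  (mu : {measure set X -> \bar R}) x r :
  (forall (x : X) (r : R), 0 < r ->
     (0 < mu (dball d x r))%E /\ (mu (dball d x r) < +oo)%E) ->
  0 < r -> 0 < mr d mu x r.
Proof.
move=> hpos r0; have [h1 h2] := hpos x r r0.
rewrite /mr; move: h1 h2; case: (mu _) => //= s; rewrite !lte_fin //.
Qed.

Lemma mr_iter {R : realType} {dsp} {X : measurableType dsp} (d : X -> X -> R)
  (mu : {measure set X -> \bar R}) (D : R) x r (n : nat) : 0 <= D -> 0 < r ->
  (forall x r, 0 < r -> mr d mu x (2 * r) <= D * mr d mu x r) ->
  mr d mu x (2 ^+ n * r) <= D ^+ n * mr d mu x r.
Proof.
move=> D0 r0 hD; elim: n => [|n IH]; first by rewrite !expr0 !mul1r.
rewrite !exprS -mulrA; apply: le_trans (hD _ _ _) _.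
  by rewrite mulr_gt0 // exprn_gt0.
by rewrite -mulrA; apply: ler_wpM2l.
Qed.

Lemma decay {R : realType} {dsp} {X : measurableType dsp} (d : X -> X -> R)
  (mu : {measure set X -> \bar R}) a q C z t :
  is_metric d -> (forall A : set X, dopen d A -> measurable A) ->
  (muhat d a mu q (dhat_ball d a None 2) < +oo)%E -> 0 <= C ->
  (forall x r, 0 < r -> (muhat d a mu q (dhat_ball d a x (2 * r)%R)
      <= C%:E * muhat d a mu q (dhat_ball d a x r))%E) ->
  1 <= t -> 2 * t <= d a z ->
  (1 + C * C) * Tr d mu a q (2 * d a z + 1) <= C * C * Tr d mu a q t.
Proof.
move=> hm hB hf C0 hC t1 tz.
have d0 := hm.1.
set s' := 2 * d a z + 1.
have mT u : measurable [set y | u < d a y] by apply: hB; exact: dopen_tail.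
have mBl x r : measurable (dball d x r) by apply: hB; exact: dopen_ball.
pose Ann := [set y | t < d a y] `&` dball d a s'.
pose Cmp := ~` dball d a s'.
have e5 : Iw d mu a q [set y | (t < d a y)%R] = (Iw d mu a q Ann + Iw d mu a q Cmp)%E.
  rewrite -Iw_split //; last 3 first.
  - exact: measurableI.
  - exact: measurableC.
  - by apply/seteqP; split => y // [[_ h] h'].
  congr Iw; apply/seteqP; split => y /=.
    move=> hy; case: (ltP (d a y) s') => h; [left; split => // | right].
    by rewrite /dball /=; apply/negP; rewrite -leNgt.
  case=> [[//]|]; rewrite /dball /= => /negP; rewrite -leNgt /s'; lra.
have e1 : (Iw d mu a q [set y | (s' < d a y)%R] <= Iw d mu a q [set y | (d a z < d a y)%R])%E.
  by apply: Iw_mono => y /=; rewrite /s'; have := d0 a z; lra.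
have e2 := UV d mu a q C z hm C0 hC.
have e3 : (Iw d mu a q [set y | (dhat d a (Some z) (Some y) < 1 / (1 + d a z) / 2)%R]
    <= Iw d mu a q Ann)%E.
  apply: Iw_mono => y /= hy; have [h1 h2] := V_ann d a z y hm hy; split; rewrite /dball /= /s'; lra.
have e4 : (Iw d mu a q [set y | (s' < d a y)%R] <= Iw d mu a q Cmp)%E.
  by apply: Iw_mono => y /= h; rewrite /dball /=; apply/negP; rewrite -leNgt; lra.
have F S := Iw_fin d mu a q S hm hf.
move/(fine_le (F _) (F _)): e1 => e1.
move/(fine_le (F _) (F _)): e4 => e4.
move/(fine_le (F _) (F _)): e3 => e3.
have e2' := fine_le (F _) _ e2; rewrite fineM //= in e2'.
have hCC : (C * C)%:E \is a fin_num by [].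
have e2'' := e2' (fin_numM hCC (F _)).
rewrite /Tr e5 (fineD (F Ann) (F Cmp)).
nra.
Qed.

Lemma upper {R : realType} {dsp} {X : measurableType dsp} (d : X -> X -> R)
  (mu : {measure set X -> \bar R}) a q C z t :
  is_metric d -> (forall A : set X, dopen d A -> measurable A) ->
  (forall (x : X) (r : R), 0 < r ->
     (0 < mu (dball d x r))%E /\ (mu (dball d x r) < +oo)%E) ->
  (muhat d a mu q (dhat_ball d a None 2) < +oo)%E -> 0 <= C -> 0 <= q ->
  (forall x r, 0 < r -> (muhat d a mu q (dhat_ball d a x (2 * r)%R)
      <= C%:E * muhat d a mu q (dhat_ball d a x r))%E) ->
  1 <= t -> 2 * t <= d a z ->
  Tr d mu a q t <= (1 + C * C) * ((1 + t) `^ (- q) * mr d mu a (2 * d a z + 1)).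
Proof.
move=> hm hB hpos hf C0 q0 hC t1 tz.
have d0 := hm.1.
set s' := 2 * d a z + 1.
set c := (1 + t) `^ (- q).
have c0 : 0 <= c by exact: powR_ge0.
have mT u : measurable [set y | u < d a y] by apply: hB; exact: dopen_tail.
have mBl x r : measurable (dball d x r) by apply: hB; exact: dopen_ball.
pose Ann := [set y | t < d a y] `&` ~` [set y | d a z < d a y].
have e5 : Iw d mu a q [set y | (t < d a y)%R] =
    (Iw d mu a q Ann + Iw d mu a q [set y | (d a z < d a y)%R])%E.
  rewrite -Iw_split //; last 2 first.
  - by apply: measurableI => //; exact: measurableC.
  - by apply/seteqP; split => y // [[_ h] h'].
  congr Iw; apply/seteqP; split => y /=.
    move=> hy; case: (ltP (d a z) (d a y)) => h; [right => // | left; split => //].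
    by apply/negP; rewrite -leNgt.
  by case=> [[//]|]; lra.
have e1 : (Iw d mu a q Ann <= c%:E * mu (dball d a s'))%E.
  apply: Iw_le_cst => // y [/= h1 /negP]; rewrite -leNgt => h2; split.
    by rewrite /dball /= /s'; have := d0 a z; lra.
  by apply: pow_anti => //; lra.
have e2 := UV d mu a q C z hm C0 hC.
have e3 : (Iw d mu a q [set y | (dhat d a (Some z) (Some y) < 1 / (1 + d a z) / 2)%R]
    <= c%:E * mu (dball d a s'))%E.
  apply: Iw_le_cst => // y /= hy; have [h1 h2] := V_ann d a z y hm hy; split.
    by rewrite /dball /= /s'; lra.
  by apply: pow_anti => //; lra.
have F S := Iw_fin d mu a q S hm hf.
have hs : 0 < s' by rewrite /s'; have := d0 a z; lra.
have Fm : mu (dball d a s') \is a fin_num.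
  by rewrite ge0_fin_numE ?(hpos a s' hs).2 // measure_ge0.
have hc : c%:E \is a fin_num by [].
have hCC : (C * C)%:E \is a fin_num by [].
have e1' := fine_le (F _) (fin_numM hc Fm) e1; rewrite fineM //= in e1'.
have e3' := fine_le (F _) (fin_numM hc Fm) e3; rewrite fineM //= in e3'.
have e2' := fine_le (F _) (fin_numM hCC (F _)) e2; rewrite fineM //= ?F in e2'.
rewrite /Tr e5 (fineD (F Ann) (F _)) /mr.
nra.
Qed.

Lemma lower {R : realType} {dsp} {X : measurableType dsp} (d : X -> X -> R)
  (mu : {measure set X -> \bar R}) a q (D kappa : R) z t (n : nat) :
  is_metric d -> (forall A : set X, dopen d A -> measurable A) ->
  (forall (x : X) (r : R), 0 < r ->
     (0 < mu (dball d x r))%E /\ (mu (dball d x r) < +oo)%E) ->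
  (muhat d a mu q (dhat_ball d a None 2) < +oo)%E -> 0 <= D -> 0 <= q ->
  (forall x r, 0 < r -> mr d mu x (2 * r) <= D * mr d mu x r) ->
  1 <= t -> 2 * t <= d a z -> d a z < kappa * (2 * t) -> 2 * kappa + 1 <= 2 ^+ n ->
  (1 + (2 * kappa + 1) * t) `^ (- q) * mr d mu a t <= D ^+ n * Tr d mu a q t.
Proof.
move=> hm hB hpos hf D0 q0 hD t1 tz zk kn.
have [d0 [_ [dsym dtr]]] := hm.
set c := (1 + (2 * kappa + 1) * t) `^ (- q).
have c0 : 0 <= c by exact: powR_ge0.
have mBl x r : measurable (dball d x r) by apply: hB; exact: dopen_ball.
have t0 : 0 < t by lra.
have kt : (2 * kappa + 1) * t <= 2 ^+ n * t by apply: ler_wpM2r => //; lra.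
have e1 : mr d mu a t <= mr d mu z (2 ^+ n * t).
  apply: mr_mono => //; first by rewrite mulr_gt0 // exprn_gt0.
  move=> y; rewrite /dball /= => hy; have := dtr z a y; rewrite (dsym z a); nra.
have e2 := mr_iter d mu D z t n D0 t0 hD.
have e3 : (c%:E * mu (dball d z t) <= Iw d mu a q [set y | (t < d a y)%R])%E.
  apply: Iw_ge_cst => // y; rewrite /dball /= => hy; split.
    by have := dtr a y z; rewrite (dsym y z); lra.
  by apply: pow_anti => //; have := d0 a y; have := dtr a z y; nra.
have F S := Iw_fin d mu a q S hm hf.
have Fm : mu (dball d z t) \is a fin_num.
  by rewrite ge0_fin_numE ?(hpos z t t0).2 // measure_ge0.
have hc : c%:E \is a fin_num by [].
have e3' := fine_le (fin_numM hc Fm) (F _) e3; rewrite fineM //= in e3'.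
rewrite /Tr.
have hDn : 0 <= D ^+ n by exact: exprn_ge0.
have hm0 : 0 <= mr d mu a t by exact/ltW/mr_gt0.
rewrite /mr in e1 e2 hm0 *.
nra.
Qed.

Lemma pow2_unb {R : realType} (x : R) : exists n : nat, x <= 2 ^+ n.
Proof.
have := archi_boundP (normr_ge0 x); set k := Num.Def.archi_bound _ => hk.
exists k; have h1 : x <= `|x| := ler_norm x.
have h2 : (k%:R : R) <= 2 ^+ k.
  rewrite -natrX ler_nat; exact: ltnW (ltn_expl k (isT : 1 < 2)%N).
lra.
Qed.

Lemma powR_ge1 {R : realType} (a b : R) : 1 <= a -> 0 <= b -> 1 <= a `^ b.
Proof. by move=> a1 b0; rewrite -(powRr0 a); apply: ler_powR. Qed.

Lemma direct {R : realType} (T : R -> R) (L beta r R' : R) :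
  1 < L -> 0 <= beta ->
  (forall u v, 1 <= u -> u <= v -> T v <= T u) ->
  (forall u, 1 <= u -> 0 <= T u) ->
  1 <= r -> r <= R' -> R' <= L * r ->
  T R' <= L `^ beta * ((r / R') `^ beta * T r).
Proof.
move=> L1 b0 Tm T0 r1 rR RL.
have R0 : 0 < R' by lra.
rewrite mulrA -powRM; last 2 first; [lra|by rewrite divr_ge0 //; lra|].
have h : 1 <= L * (r / R').
  by rewrite mulrA ler_pdivlMr // mul1r.
have := powR_ge1 _ _ h b0; have := Tm r R' r1 rR; have := T0 r r1; nra.
Qed.

Lemma iterate {R : realType} (T : R -> R) (L C beta r : R) :
  1 < L -> 0 <= C -> 0 <= beta -> L `^ beta * (C * C) <= 1 + C * C ->
  (forall u v, 1 <= u -> u <= v -> T v <= T u) ->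
  (forall u, 1 <= u -> 0 <= T u) ->
  (forall t, 1 <= t -> (1 + C * C) * T (L * t) <= C * C * T t) ->
  1 <= r -> forall (k : nat) (R' : R), r <= R' -> R' <= L ^+ k * r ->
  T R' <= L `^ beta * ((r / R') `^ beta * T r).
Proof.
move=> L1 C0 b0 hLb Tm T0 Td r1; elim => [|k IH] R' rR RL.
  by apply: direct => //; rewrite expr0 mul1r in RL; nra.
case: (leP R' (L * r)) => hR; first exact: direct.
have L0 : 0 < L by lra.
set R0 := R' / L.
have hR0 : R' = L * R0 by rewrite /R0 mulrC divfK // gt_eqF.
have rR0 : r <= R0 by rewrite /R0 ler_pdivlMr // mulrC; lra.
have R0k : R0 <= L ^+ k * r.
  by rewrite /R0 ler_pdivrMr //; rewrite exprSr in RL; nra.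
have ih := IH R0 rR0 R0k.
have d1 := Td R0 (le_trans r1 rR0).
rewrite -hR0 in d1.
have eq : (r / R0) `^ beta = L `^ beta * (r / R') `^ beta.
  rewrite -powRM; last 2 first; [lra| by rewrite divr_ge0; lra|].
  by congr (_ `^ _); rewrite hR0; field; apply/andP; split; rewrite gt_eqF //; lra.
rewrite eq in ih.
have Pb : 0 < L `^ beta by rewrite powR_gt0 //; lra.
have TR0 := T0 R0 (le_trans r1 rR0).
have TR := T0 R' (le_trans r1 rR).
have key : L `^ beta * T R' <= T R0.
  have hC : 0 < 1 + C * C by nra.
  rewrite -(ler_pM2l hC); nra.
set Y := L `^ beta * ((r / R') `^ beta * T r).
have : L `^ beta * T R' <= L `^ beta * Y by rewrite /Y; nra.
by rewrite ler_pM2l.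
Qed.

Lemma pow_anti' {R : realType} (x y q : R) : 0 < x -> x <= y -> 0 <= q ->
  y `^ (- q) <= x `^ (- q).
Proof.
move=> x0 xy q0; rewrite !powRN lef_pV2 ?posrE ?powR_gt0 //; last lra.
by apply: ge0_ler_powR => //; rewrite nnegrE; lra.
Qed.

Lemma p1_lem {R : realType} (kappa R' q : R) : 1 < kappa -> 1 <= R' -> 0 <= q ->
  ((2 * kappa + 2) * R') `^ (- q) <= (1 + (2 * kappa + 1) * R') `^ (- q).
Proof.
move=> k1 R1 q0; have kR : 0 <= kappa * R' by apply: mulr_ge0; lra.
by apply: pow_anti' => //; lra.
Qed.

Lemma p3_lem {R : realType} (kappa R' q : R) : 1 < kappa -> 1 <= R' ->
  ((2 * kappa + 2) * R') `^ (- q) = (2 * kappa + 2) `^ (- q) * R' `^ (- q).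
Proof. by move=> k1 R1; rewrite powRM //; lra. Qed.

Lemma p4_lem {R : realType} (r R' q : R) : 0 < r -> 0 < R' ->
  r `^ (- q) = (r / R') `^ (- q) * R' `^ (- q).
Proof.
move=> r0 R0; rewrite -powRM; [|by rewrite divr_ge0 // ltW|exact: ltW].
by rewrite divfK // gt_eqF.
Qed.

Lemma p5_lem {R : realType} (x beta q : R) : 0 < x ->
  x `^ beta * x `^ (- q) * x `^ (q - beta) = 1.
Proof.
move=> x0; have xn : (x != 0) by rewrite gt_eqF.
rewrite -powRD; last by rewrite xn implybT.
rewrite -powRD; last by rewrite xn implybT.
have -> : beta + - q + (q - beta) = 0 by ring.
exact: powRr0.
Qed.


Theorem theorem4p5 (R : realType) (dsp : measure_display) (X : measurableType dsp)
  (d : X -> X -> R) (mu : {measure set X -> \bar R}) (a : X) (kappa q : R) :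
  is_metric d ->
  (* Borel: every open set is measurable *)
  (forall A : set X, dopen d A -> measurable A) ->
  (* mu is complete *)
  (forall N : set X, measurable N -> mu N = 0%E ->
     forall A : set X, A `<=` N -> measurable A) ->
  (* 0 < mu(B) < oo for every ball *)
  (forall (x : X) (r : R), 0 < r ->
     (0 < mu (dball d x r))%E /\ (mu (dball d x r) < +oo)%E) ->
  unbounded_at d a ->
  unif_perfect_at d a kappa ->
  doubling d mu ->
  0 < q ->
  doubling_hat d a mu q ->
  exists s : R, 0 < s /\ s < q /\
    exists Cs : R, 0 < Cs /\
      forall r R' : R, 1 <= r -> r <= R' ->
        Cs * (r / R') `^ s <=
          fine (mu (dball d a r)) / fine (mu (dball d a R')).
Proof.
move=> hm hB _ hpos _ [k1 hup] [D hD] q0 [C hC].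
have d0 := hm.1.
have hfinm x r : 0 < r -> mu (dball d x r) \is a fin_num.
  by move=> r0; rewrite ge0_fin_numE ?measure_ge0 // (hpos x r r0).2.
have hDr x r : 0 < r -> mr d mu x (2 * r) <= D * mr d mu x r.
  move=> r0; have [_ [h2 _]] := hD x r r0.
  have r2 : 0 < 2 * r by lra.
  have f1 := hfinm x (2 * r) r2.
  have f2 := hfinm x r r0.
  have hDf : D%:E \is a fin_num by [].
  by have := fine_le f1 (fin_numM hDf f2) h2; rewrite fineM.
have Dp : 0 < D.
  have := hDr a 1 ltr01; have := mr_gt0 d mu a 1 hpos ltr01.
  have := mr_gt0 d mu a (2 * 1) hpos (ltac:(lra)); nra.
have hCe x r : 0 < r -> (muhat d a mu q (dhat_ball d a x (2 * r)%R)
      <= C%:E * muhat d a mu q (dhat_ball d a x r))%E.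
  by move=> r0; have [_ [h _]] := hC x r r0.
have hf : (muhat d a mu q (dhat_ball d a None 2) < +oo)%E.
  by have [_ [_ h]] := hC None 2 (ltac:(lra)).
have Cp : 0 < C.
  case: (ltP 0 C) => // Cn; have [h1 [h2 _]] := hC None 1 ltr01.
  have : (C%:E * muhat d a mu q (dhat_ball d a None 1) <= 0)%E.
    by apply: mule_le0_ge0; [rewrite lee_fin | exact: Iw_ge0].
  by move=> /(le_trans h2) /(lt_le_trans h1); rewrite ltxx.
have C0 : 0 <= C by lra.
have q0' : 0 <= q by lra.
set L := 4 * kappa + 1.
have L1 : 1 < L by rewrite /L; lra.
have L2 : 2 <= L by rewrite /L; lra.
have [n hn] := pow2_unb (4 * kappa + 1).
have hn' : 2 * kappa + 1 <= 2 ^+ n by lra.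
set T := Tr d mu a q.
have Tm u v : 1 <= u -> u <= v -> T v <= T u.
  move=> u1 uv; apply: fine_le; try exact: Iw_fin.
  by apply: Iw_mono => y /=; lra.
have T0 u : 1 <= u -> 0 <= T u by move=> _; apply: fine_ge0; exact: Iw_ge0.
have getz t : 1 <= t -> exists z, 2 * t <= d a z /\ d a z < kappa * (2 * t).
  move=> t1; have [z [h1 h2]] := hup (2 * t) (ltac:(lra)).
  by exists z; split => //; move/negP: h2; rewrite /dball /= -leNgt.
have Td t : 1 <= t -> (1 + C * C) * T (L * t) <= C * C * T t.
  move=> t1; have [z [hz1 hz2]] := getz t t1.
  have e := decay d mu a q C z t hm hB hf C0 hCe t1 hz1.
  have : T (L * t) <= T (2 * d a z + 1).
    by apply: Tm; [lra | rewrite /L; nra].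
  rewrite /T in e *; nra.
set y := (1 + C * C) / (C * C).
have CC : 0 < C * C by rewrite mulr_gt0.
have y1 : 1 < y by rewrite /y ltr_pdivlMr // mul1r; lra.
have lnL : 0 < ln L by exact: ln_gt0.
set b0 := ln y / ln L.
have b0p : 0 < b0 by rewrite divr_gt0 // ln_gt0.
set beta := Num.min (q / 2) b0.
have bp : 0 < beta by rewrite /beta lt_min b0p divr_gt0.
have bq : beta <= q / 2 by rewrite /beta ge_min lexx.
have bb : beta <= b0 by rewrite /beta ge_min lexx orbT.
have hLb : L `^ beta * (C * C) <= 1 + C * C.
  have : L `^ beta <= L `^ b0 by apply: ler_powR => //; lra.
  have -> : L `^ b0 = y.
    rewrite /powR gt_eqF; last lra.
    rewrite /b0 divfK ?gt_eqF // lnK // posrE; lra.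
  move=> h; have : L `^ beta * (C * C) <= y * (C * C) by rewrite ler_wpM2r // ltW.
  by rewrite /y divfK // gt_eqF.
exists (q - beta); split; first lra; split; first lra.
set A := (2 * kappa + 2) `^ (- q).
have Ap : 0 < A by rewrite powR_gt0 //; lra.
set K0 := D ^+ n * L `^ beta * (1 + C * C) * D ^+ n.
have Dn : 0 < D ^+ n by exact: exprn_gt0.
have Lb : 0 < L `^ beta by rewrite powR_gt0 //; lra.
have K0p : 0 < K0 by rewrite /K0 !mulr_gt0 //; lra.
exists (A / K0); split; first by rewrite divr_gt0.
move=> r R' r1 rR.
have R1 : 1 <= R' by exact: le_trans rR.
have r0 : 0 < r by exact: lt_le_trans ltr01 r1.
have R0 : 0 < R' by exact: lt_le_trans ltr01 R1.
have [zR [hzR1 hzR2]] := getz R' R1.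
have [zr [hzr1 hzr2]] := getz r r1.
have lo := lower d mu a q D kappa zR R' n hm hB hpos hf (ltW Dp) q0' hDr R1 hzR1 hzR2 hn'.
have [k hk] := pow2_unb (R' / r).
have RLk : R' <= L ^+ k * r.
  have h1 : R' <= 2 ^+ k * r by rewrite -ler_pdivrMr.
  have h2 : 2 ^+ k <= L ^+ k.
    apply: lerXn2r; [by rewrite nnegrE | by rewrite nnegrE; exact: le_trans L2 | exact: L2].
  exact: le_trans h1 (ler_wpM2r (ltW r0) h2).
have it := iterate T L C beta r L1 C0 (ltW bp) hLb Tm T0 Td r1 k R' rR RLk.
have up := upper d mu a q C zr r hm hB hpos hf C0 q0' hCe r1 hzr1.
have m2z : mr d mu a (2 * d a zr + 1) <= D ^+ n * mr d mu a r.
  apply: le_trans (mr_iter d mu D a r n (ltW Dp) r0 hDr).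
  apply: mr_mono => //.
  - by apply: (lt_le_trans ltr01); rewrite lerDr mulr_ge0.
  - by rewrite mulr_gt0 // exprn_gt0.
  move=> w; rewrite /dball /= => hw.
  have h4 := ler_wpM2r (ltW r0) hn.
  clear - hw hzr2 h4 r1; lra.
set x := r / R'.
have x0 : 0 < x by rewrite divr_gt0.
have p1 := p1_lem kappa R' q k1 R1 q0'.
have p2 : (1 + r) `^ (- q) <= r `^ (- q).
  by apply: pow_anti' => //; rewrite lerDr.
have p3 : ((2 * kappa + 2) * R') `^ (- q) = A * R' `^ (- q) by exact: p3_lem.
have p4 : r `^ (- q) = x `^ (- q) * R' `^ (- q) by exact: p4_lem.
have p5 := p5_lem x beta q x0.
set Pr := R' `^ (- q).
have Prp : 0 < Pr by rewrite powR_gt0.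
set mR := mr d mu a R'.
set mr0 := mr d mu a r.
have mRp : 0 < mR by exact: mr_gt0.
have mrp : 0 < mr0 by exact: mr_gt0.
set xb := x `^ beta. set xm := x `^ (- q). set xs := x `^ (q - beta).
have xbp : 0 <= xb by exact: powR_ge0.
have xmp : 0 <= xm by exact: powR_ge0.
have xsp : 0 <= xs by exact: powR_ge0.
have Tr0 := T0 r r1.
have CC0 : 0 <= 1 + C * C by exact: addr_ge0 ler01 (mulr_ge0 C0 C0).
have s1 : A * Pr * mR <= D ^+ n * T R'.
  apply: le_trans lo; rewrite -p3; apply: ler_wpM2r => //; exact: ltW.
have s4 : (1 + r) `^ (- q) * mr d mu a (2 * d a zr + 1) <= (xm * Pr) * (D ^+ n * mr0).
  rewrite -p4; apply: ler_pM => //; [exact: powR_ge0 | apply: fine_ge0; exact: measure_ge0].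
have s3 : T r <= (1 + C * C) * ((xm * Pr) * (D ^+ n * mr0)).
  by apply: le_trans up _; apply: ler_wpM2l.
have s2 : T R' <= L `^ beta * (xb * ((1 + C * C) * ((xm * Pr) * (D ^+ n * mr0)))).
  apply: le_trans it _; apply: ler_wpM2l; first exact: ltW.
  by apply: ler_wpM2l.
have s5 : Pr * (A * mR) <= Pr * (K0 * (xb * xm) * mr0).
  have -> : Pr * (K0 * (xb * xm) * mr0) = D ^+ n * (L `^ beta * (xb * ((1 + C * C) * ((xm * Pr) * (D ^+ n * mr0))))).
    by rewrite /K0; ring.
  rewrite mulrA (mulrC Pr); apply: le_trans s1 _; apply: ler_wpM2l => //; exact: ltW.
rewrite ler_pM2l // in s5.
have s6 : A * mR * xs <= K0 * mr0.
  have : A * mR * xs <= K0 * (xb * xm) * mr0 * xs by apply: ler_wpM2r.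
  have -> : K0 * (xb * xm) * mr0 * xs = K0 * mr0 * (xb * xm * xs) by ring.
  by rewrite p5 mulr1.
rewrite -(ler_pM2r (mulr_gt0 K0p mRp)).
have -> : A / K0 * xs * (K0 * mR) = A * mR * xs by field; rewrite gt_eqF.
have -> : fine (mu (dball d a r)) / fine (mu (dball d a R')) * (K0 * mR) = K0 * mr0.
  by rewrite /mR /mr0 /mr; field; rewrite gt_eqF.
exact: s6.
Qed.
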